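(* Let $n\ge m\ge1$, let $X_1,\dots,X_n$ be strings of length $\ell_x$ and $Y_1,\dots,Y_m$ strings of length $\ell_y$ over an alphabet $\Sigma$. Let $\sigma,\rho,\mu\notin\Sigma$ be new symbols, $\kappa_1:=4(\ell_x+\ell_y)$, $\kappa_2:=2\kappa_1+\ell_x$, and $G(S):=\sigma^{\kappa_1}S\rho^{\kappa_1}$. Define $$X:=G(X_1)\,\mu^{\kappa_2}\,G(X_2)\,\mu^{\kappa_2}\cdots\mu^{\kappa_2}\,G(X_n),\qquad Y:=\mu^{n\kappa_2}\,G(Y_1)\,\mu^{\kappa_2}\,G(Y_2)\cdots\mu^{\kappa_2}\,G(Y_m)\,\mu^{n\kappa_2}.$$ Then, with $C:=2n\kappa_2$, $$\min_{\Lambda\in\mathbf\Lambda_{n,m}}\mathrm{cost}(\Lambda)\ \le\ \delta(X,Y)-C\ \le\ \min_{\Lambda\in\mathcal S_{n,m}}\mathrm{cost}(\Lambda).$$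
   Context: For strings $U,V$, $L(U,V)$ is the length of a longest common subsequence and $\delta(U,V):=|U|+|V|-2L(U,V)$. An alignment (w.r.t. $n\ge m$) is a set $\Lambda=\{(i_1,j_1),\dots,(i_k,j_k)\}$ with $0\le k\le m$, $1\le i_1<\dots<i_k\le n$ and $1\le j_1<\dots<j_k\le m$; $\mathbf\Lambda_{n,m}$ is the set of all alignments. A structured alignment is one of the form $\{(\Delta+1,1),\dots,(\Delta+m,m)\}$ with $0\le\Delta\le n-m$; $\mathcal S_{n,m}$ is the set of these. With $\gamma:=\max_{i,j}\delta(X_i,Y_j)$, the cost of $\Lambda=\{(i_1,j_1),\dots,(i_{|\Lambda|},j_{|\Lambda|})\}$ is $\mathrm{cost}(\Lambda):=\sum_{k=1}^{|\Lambda|}\delta(X_{i_k},Y_{j_k})+(m-|\Lambda|)\gamma$ if $|\Lambda|<m$, and $\sum_{k=1}^{m}\delta(X_{i_k},Y_{j_k})+(i_m-i_1-m+1)\gamma$ if $|\Lambda|=m$. *)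

(* Defs.v *)
From HB Require Import structures.
From mathcomp Require Import all_boot all_order all_algebra.
Set Implicit Arguments. Unset Strict Implicit. Unset Printing Implicit Defensive.

Definition lcs (T : eqType) (U V : seq T) : nat :=
  \max_(b : (size U).-tuple bool | subseq (mask b U) V) size (mask b U).

Definition delta (T : eqType) (U V : seq T) : nat :=
  size U + size V - 2 * lcs U V.

(* Strings are indexed 0-based: X_1..X_n are Xs 0 .. Xs (n-1), Y_1..Y_m are
   Ys 0 .. Ys (m-1).  Alignment pairs are likewise 0-based. *)

Definition gamma (T : eqType) (n m : nat) (Xs Ys : nat -> seq T) : nat :=
  \max_(i < n) \max_(j < m) delta (Xs i) (Ys j).

Definition alignment (n m : nat) (L : seq (nat * nat)) : bool :=
  all (fun p => (p.1 < n) && (p.2 < m)) L &&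
  sorted (fun p q => (p.1 < q.1) && (p.2 < q.2)) L.

Definition structured (m Delta : nat) : seq (nat * nat) :=
  [seq (Delta + j, j) | j <- iota 0 m].

Definition cost (T : eqType) (n m : nat) (Xs Ys : nat -> seq T)
    (L : seq (nat * nat)) : nat :=
  \sum_(p <- L) delta (Xs p.1) (Ys p.2) +
  (if size L < m then (m - size L) * gamma n m Xs Ys
   else ((last (0, 0) L).1 - (head (0, 0) L).1 + 1 - m) * gamma n m Xs Ys).

Definition ext (S : eqType) : eqType := (S + 'I_3)%type.
Definition sym_sigma (S : eqType) : ext S := inr (@Ordinal 3 0 isT).
Definition sym_rho (S : eqType) : ext S := inr (@Ordinal 3 1 isT).
Definition sym_mu (S : eqType) : ext S := inr (@Ordinal 3 2 isT).

Definition Gpad (S : eqType) (k1 : nat) (s : seq S) : seq (ext S) :=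
  nseq k1 (sym_sigma S) ++ map inl s ++ nseq k1 (sym_rho S).

Definition bigX (S : eqType) (k1 k2 n : nat) (Xs : nat -> seq S) : seq (ext S) :=
  Gpad k1 (Xs 0) ++
  flatten [seq nseq k2 (sym_mu S) ++ Gpad k1 (Xs i) | i <- iota 1 n.-1].

Definition bigY (S : eqType) (k1 k2 n m : nat) (Ys : nat -> seq S) : seq (ext S) :=
  nseq (n * k2) (sym_mu S) ++ Gpad k1 (Ys 0) ++
  flatten [seq nseq k2 (sym_mu S) ++ Gpad k1 (Ys j) | j <- iota 1 m.-1] ++
  nseq (n * k2) (sym_mu S).

(* Main.v *)
Require Import Defs.
From HB Require Import structures.
From mathcomp Require Import all_boot all_order all_algebra zify.
Set Implicit Arguments. Unset Strict Implicit. Unset Printing Implicit Defensive.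

Lemma lcs_ub (T : eqType) (U V w : seq T) :
  subseq w U -> subseq w V -> size w <= lcs U V.
Proof.
move=> /subseqP [mm Hs ->] HV.
have Hm : size mm == size U by apply/eqP.
pose b : (size U).-tuple bool := Tuple Hm.
rewrite /lcs.
exact: (@leq_bigmax_cond _ (fun b : (size U).-tuple bool => subseq (mask b U) V)
         (fun b : (size U).-tuple bool => size (mask b U)) b).
Qed.

Lemma lcs_le (T : eqType) (U V : seq T) B :
  (forall w, subseq w U -> subseq w V -> size w <= B) -> lcs U V <= B.
Proof.
move=> H; rewrite /lcs; apply/bigmax_leqP => b Hb.
by apply: H => //; apply: mask_subseq.
Qed.

Lemma lcs_size_l (T : eqType) (U V : seq T) : lcs U V <= size U.
Proof. by apply: lcs_le => w H _; apply: size_subseq. Qed.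
Lemma lcs_size_r (T : eqType) (U V : seq T) : lcs U V <= size V.
Proof. by apply: lcs_le => w _ H; apply: size_subseq. Qed.

Lemma lcs_witness (T : eqType) (U V : seq T) :
  exists2 w, subseq w U /\ subseq w V & size w = lcs U V.
Proof.
have [b Hb Heq] : exists2 b : (size U).-tuple bool, subseq (mask b U) V &
   lcs U V = size (mask b U).
  rewrite /lcs.
  have H0 : subseq (mask (nseq (size U) false) U) V.
    by rewrite mask_false sub0seq.
  have Hsz : size (nseq (size U) false) == size U by rewrite size_nseq.
  pose b0 : (size U).-tuple bool := Tuple Hsz.
  have Hc : 0 < #|(fun b : (size U).-tuple bool => subseq (mask b U) V)|.
    by apply/card_gt0P; exists b0; exact: H0.
  have [i Hi ->] := @eq_bigmax_cond _ (fun b : (size U).-tuple bool => subseq (mask b U) V)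
         (fun b : (size U).-tuple bool => size (mask b U)) Hc.
  by exists i.
by exists (mask b U) => //; split => //; apply: mask_subseq.
Qed.

Lemma lcs_cons (T : eqType) (c : T) U V : lcs (c :: U) (c :: V) = (lcs U V).+1.
Proof.
apply/eqP; rewrite eqn_leq; apply/andP; split.
  apply: lcs_le => -[|a w] //= H1 H2.
  case E: (a == c) H1 H2 => H1 H2; first by apply: lcs_ub.
  by have := lcs_ub H1 H2 => /= /leqW.
have [w [H1 H2] <-] := lcs_witness U V.
by have := @lcs_ub _ (c :: U) (c :: V) (c :: w); rewrite /= eqxx; apply.
Qed.

Lemma lcs_nseq (T : eqType) (c : T) k U V :
  lcs (nseq k c ++ U) (nseq k c ++ V) = k + lcs U V.
Proof. by elim: k => //= k IH; rewrite lcs_cons IH. Qed.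

Lemma subseq_cat_split (T : eqType) (w s1 s2 : seq T) :
  subseq w (s1 ++ s2) -> exists w1 w2, [/\ w = w1 ++ w2, subseq w1 s1 & subseq w2 s2].
Proof.
move=> /subseqP [mm Hs ->].
rewrite -(cat_take_drop (size s1) mm) mask_cat; last first.
  by apply: size_takel; rewrite Hs size_cat leq_addr.
by exists (mask (take (size s1) mm) s1), (mask (drop (size s1) mm) s2); split => //; apply: mask_subseq.
Qed.

Definition tagrel (T : Type) (r : rel T) (x y : nat * T) :=
  (x.1 <= y.1) && ((x.1 == y.1) ==> r x.2 y.2).

Lemma tag_decomp (T : eqType) (r : rel T) (Htr : transitive r) (ss : seq (seq T)) :
  all (sorted r) ss -> forall a w, subseq w (flatten ss) ->
  exists tl : seq (nat * T), [/\ map snd tl = w,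
     pairwise (tagrel r) tl,
     all (fun x => a <= x.1 < a + size ss) tl &
     forall i, subseq (map snd (filter (fun x => x.1 == i) tl)) (nth [::] ss (i - a))].
Proof.
elim: ss => [|s ss IH] /= Hall a w.
  move=> /= Hw; have -> : w = [::] by apply/eqP; rewrite -subseq0. exists [::]; split => //= i; exact: sub0seq.
case/andP: Hall => Hs Hall.
move/subseq_cat_split => [w1 [w2 [-> H1 H2]]].
have [tl2 [E2 P2 A2 S2]] := IH Hall a.+1 w2 H2.
exists (map (pair a) w1 ++ tl2); split.
- by rewrite map_cat E2 -map_comp map_id.
- rewrite pairwise_cat P2 andbT pairwise_map; apply/andP; split.
    apply/allrelP => x y /mapP [z _ ->] /(allP A2) /andP [Hy _] /=.
    rewrite /tagrel /= (ltnW Hy) /=.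
    by rewrite eq_sym (gtn_eqF Hy).
  have : pairwise r w1 by rewrite -sorted_pairwise //; apply: subseq_sorted H1 Hs.
  apply: sub_pairwise => x y /= Hxy; by rewrite /tagrel /= leqnn eqxx.
- rewrite all_cat; apply/andP; split.
    by apply/allP => x /mapP [z _ ->] /=; rewrite leqnn /= addnS ltnS leq_addr.
  by apply: sub_all A2 => x /andP [Hx1 Hx2]; rewrite ltnW //= addnS -addSn.
- move=> i; rewrite filter_cat map_cat.
  have F1 : [seq x <- map (pair a) w1 | x.1 == i] = if a == i then map (pair a) w1 else [::].
    case: eqP => [->|ne].
      rewrite (eq_in_filter (a2 := predT)) ?filter_predT //.
      move=> x /mapP [z _ ->] /=; exact: eqxx.
    rewrite (eq_in_filter (a2 := pred0)) ?filter_pred0 //.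
    by move=> x /mapP [z _ ->] /=; apply/eqP.
  have F2 : i <= a -> [seq x <- tl2 | x.1 == i] = [::].
    move=> Hi; rewrite (eq_in_filter (a2 := pred0)) ?filter_pred0 // => x /(allP A2) /andP [Hx _] /=.
    by apply/negbTE; rewrite neq_ltn (leq_ltn_trans Hi Hx) orbT.
  rewrite F1; case: (ltngtP i a) => Hi.
  - case: (a =P i) => [E|_]; first by rewrite E ltnn in Hi.
    by rewrite F2 ?(ltnW Hi) // sub0seq.
  - case: (a =P i) => [E|_]; first by rewrite E ltnn in Hi.
    have -> : i - a = (i - a.+1).+1 by rewrite subnS prednK // subn_gt0.
    exact: S2.
  - subst i; case: (a =P a) => [_|]//; by rewrite F2 // cats0 subnn /= -map_comp map_id.
Qed.

Lemma pairwise_zip (T1 T2 : Type) (r1 : rel T1) (r2 : rel T2) s1 s2 :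
  pairwise r1 s1 -> pairwise r2 s2 ->
  pairwise (fun x y => r1 x.1 y.1 && r2 x.2 y.2) (zip s1 s2).
Proof.
elim: s1 s2 => [|a s1 IH] [|b s2] //= /andP [A1 P1] /andP [A2 P2].
rewrite IH // andbT.
elim: s1 s2 A1 A2 {IH P1 P2} => [|c s1 IH] [|d s2] //= /andP [-> A1] /andP [-> A2] /=.
exact: IH.
Qed.

Lemma zip_snd_eq (T1 T2 : Type) (U : eqType) (s1 : seq (T1 * U)) (s2 : seq (T2 * U)) :
  map snd s1 = map snd s2 -> all (fun p => p.1.2 == p.2.2) (zip s1 s2).
Proof.
elim: s1 s2 => [|a s1 IH] [|b s2] //= [-> E]; rewrite eqxx /=; exact: IH.
Qed.

Lemma zip_filter_fst (T1 T2 : Type) (P : pred T1) (s1 : seq T1) (s2 : seq T2) :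
  size s1 = size s2 -> map fst (filter (fun p => P p.1) (zip s1 s2)) = filter P s1.
Proof.
elim: s1 s2 => [|a s1 IH] [|b s2] //= [E]; case: (P a) => /=; rewrite IH //.
Qed.

Lemma zip_filter_snd (T1 T2 : Type) (P : pred T2) (s1 : seq T1) (s2 : seq T2) :
  size s1 = size s2 -> map snd (filter (fun p => P p.2) (zip s1 s2)) = filter P s2.
Proof.
elim: s1 s2 => [|a s1 IH] [|b s2] //= [E]; case: (P b) => /=; rewrite IH //.
Qed.

Lemma mem_zip_12 (T1 T2 : eqType) (s1 : seq T1) (s2 : seq T2) p :
  p \in zip s1 s2 -> (p.1 \in s1) && (p.2 \in s2).
Proof.
elim: s1 s2 => [|a s1 IH] [|b s2] //=; rewrite inE => /orP [/eqP ->|/IH /andP [H1 H2]].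
  by rewrite !inE !eqxx.
by rewrite !inE H1 H2 !orbT.
Qed.

Definition trip (T : Type) := ((nat * nat) * T)%type.

Definition Rtrip (T : Type) (r : rel T) (e f : trip T) :=
  tagrel r (e.1.1, e.2) (f.1.1, f.2) && tagrel r (e.1.2, e.2) (f.1.2, f.2).

Lemma build_trip (T : eqType) (r : rel T) (Htr : transitive r) (ssx ssy : seq (seq T)) w :
  all (sorted r) ssx -> all (sorted r) ssy ->
  subseq w (flatten ssx) -> subseq w (flatten ssy) ->
  exists t : seq (trip T), [/\ size t = size w,
    pairwise (Rtrip r) t,
    all (fun e => (e.1.1 < size ssx) && (e.1.2 < size ssy)) t,
    forall i, subseq (map snd (filter (fun e => e.1.1 == i) t)) (nth [::] ssx i) &
    forall j, subseq (map snd (filter (fun e => e.1.2 == j) t)) (nth [::] ssy j)].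
Proof.
move=> Hx Hy Sx Sy.
have [tx [Ex Px Ax Fx]] := tag_decomp Htr Hx 0 Sx.
have [ty [Ey Py Ay Fy]] := tag_decomp Htr Hy 0 Sy.
have Hsz : size tx = size ty by rewrite -(size_map snd tx) -(size_map snd ty) Ex Ey.
have Heq : all (fun p => p.1.2 == p.2.2) (zip tx ty) by apply: zip_snd_eq; rewrite Ex Ey.
pose f (p : (nat * T) * (nat * T)) : trip T := ((p.1.1, p.2.1), p.1.2).
exists (map f (zip tx ty)); split.
- by rewrite size_map size_zip Hsz minnn -Ey size_map.
- rewrite pairwise_map.
  have Hsub : {in (fun p : (nat * T) * (nat * T) => p.1.2 == p.2.2) &,
     subrel (fun x y => tagrel r x.1 y.1 && tagrel r x.2 y.2) (relpre f (Rtrip r))}.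
    move=> [[a1 a2] [b1 b2]] [[c1 c2] [d1 d2]]; rewrite !unfold_in /=.
    move=> /eqP E1 /eqP E2 /andP [H1 H2]; subst.
    by rewrite /Rtrip /f /= H1 H2.
  exact: (sub_in_pairwise Hsub Heq (pairwise_zip Px Py)).
- rewrite all_map; apply/allP => p Hp /=.
  case/andP: (mem_zip_12 Hp) => /(allP Ax) /andP [_ H1] /(allP Ay) /andP [_ H2].
  by rewrite /f /= H1 H2.
- move=> i; rewrite filter_map -map_comp.
  have := Fx i; rewrite subn0.
  by rewrite -(zip_filter_fst (fun x => x.1 == i) Hsz) -map_comp.
- move=> j; rewrite filter_map -map_comp.
  have := Fy j; rewrite subn0.
  rewrite -(zip_filter_snd (fun x => x.1 == j) Hsz) -map_comp.
  set L := filter _ (zip tx ty).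
  have -> : map (snd \o f) L = map (snd \o snd) L.
    apply/eq_in_map => p; rewrite mem_filter => /andP [_ Hp].
    by have /eqP := allP Heq p Hp.
  by [].
Qed.

Lemma sum_ind_eq (x lo hi : nat) :
  \sum_(lo <= j < hi) (x == j) = (lo <= x < hi).
Proof.
elim: hi => [|hi IH]; first by rewrite big_geq // ltn0 andbF.
case: (leqP lo hi) => Hlo.
  rewrite big_nat_recr //= IH.
  rewrite ltnS; case: (ltngtP x hi) => Hx.
  - by rewrite ?andbT ?andbF ?addn0.
  - by rewrite ?andbT ?andbF ?addn0.
  - by subst x; rewrite ?andbT ?andbF ?addn0 Hlo.
rewrite big_geq //; case: (leqP lo x) => //= Hx.
by rewrite ltnNge (leq_trans Hlo Hx).
Qed.

Lemma count_split (T : eqType) (p : pred T) (f : T -> nat) lo hi (s : seq T) :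
  (forall e, e \in s -> p e -> lo <= f e < hi) ->
  count p s = \sum_(lo <= j < hi) count (fun e => p e && (f e == j)) s.
Proof.
elim: s => [|x s IH] H /=; first by rewrite big1.
rewrite big_split /= IH; last by move=> e He; apply: H; rewrite inE He orbT.
congr (_ + _).
case Px: (p x) => /=; last by rewrite big1.
rewrite sum_ind_eq; have := H x (mem_head _ _) Px; by move=> ->.
Qed.

Lemma foldr_minn_le (d x : nat) s : x \in s -> foldr minn d s <= x.
Proof.
elim: s => //= y s IH; rewrite inE => /orP [/eqP ->|/IH H]; first exact: geq_minl.
exact: leq_trans (geq_minr _ _) H.
Qed.

Lemma foldr_minn_mem (d : nat) s : s != [::] -> all (fun x => x < d) s -> foldr minn d s \in s.
Proof.
elim: s => //= y s IH _ /andP [Hy Ha].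
case: (eqVneq s [::]) => [->|ne] /=.
  by rewrite inE minnC /minn ltnNge (ltnW Hy) /=.
have H := IH ne Ha; rewrite /minn; case: ifP => _; first by rewrite mem_head.
by rewrite inE H orbT.
Qed.

Lemma subseq_map_inj (T1 T2 : eqType) (f : T1 -> T2) (a b : seq T1) :
  injective f -> subseq (map f a) (map f b) -> subseq a b.
Proof.
move=> inj; elim: b a => [|y b IH] [|x a] //=.
rewrite (inj_eq inj); case: (x == y) => H; first exact: IH.
by have := IH (x :: a); apply.
Qed.

Lemma sorted_ltn_last (x : nat) s : sorted ltn (x :: s) -> x + size s <= last x s.
Proof.
elim: s x => [|y s IH] x /=; first by rewrite addn0.
case/andP => Hxy Hs; have := IH y Hs; lia.
Qed.

Lemma sorted_ltn_size (m : nat) s : sorted ltn s -> all (fun x => x < m) s -> size s <= m.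
Proof.
move=> Hs Ha; rewrite -(size_iota 0 m); apply: uniq_leq_size.
  exact: sorted_uniq ltn_trans ltnn _ Hs.
by move=> x /(allP Ha) Hx; rewrite mem_iota.
Qed.

Lemma head_mem0 (s : seq nat) : s != [::] -> head 0 s \in s.
Proof. by case: s => //= x s _; rewrite mem_head. Qed.
Lemma last_mem0 (s : seq nat) : s != [::] -> last 0 s \in s.
Proof. by case: s => //= x s _; rewrite mem_last. Qed.
Lemma head_map_fst (T : Type) (d : T) (g : nat -> nat * T) (s : seq nat) :
  (forall i, (g i).1 = i) -> (head (0, d) (map g s)).1 = head 0 s.
Proof. by move=> H; case: s => //= x s; rewrite H. Qed.
Lemma last_map_fst (T : Type) (d : T) (g : nat -> nat * T) (s : seq nat) :
  (forall i, (g i).1 = i) -> (last (0, d) (map g s)).1 = last 0 s.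
Proof. by move=> H; case: s => //= x s; rewrite last_map H. Qed.
Lemma sorted_span (s : seq nat) : sorted ltn s -> s != [::] -> head 0 s + (size s - 1) <= last 0 s.
Proof. case: s => //= x s Hs _; have := sorted_ltn_last Hs; lia. Qed.

Definition rk (S : eqType) (c : ext S) : nat :=
  match c with inl _ => 2 | inr o => match val o with 0 => 1 | 1 => 3 | _ => 0 end end.
Definition rle (S : eqType) : rel (ext S) := fun a b => rk a <= rk b.
Definition bl (S : eqType) k1 k2 (s : seq S) : seq (ext S) := nseq k2 (sym_mu S) ++ Gpad k1 s.

Lemma rle_trans (S : eqType) : transitive (@rle S).
Proof. by move=> a b c; rewrite /rle; apply: leq_trans. Qed.

Lemma rk_mu (S : eqType) : rk (sym_mu S) = 0. Proof. by []. Qed.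
Lemma rk_sigma (S : eqType) : rk (sym_sigma S) = 1. Proof. by []. Qed.
Lemma rk_rho (S : eqType) : rk (sym_rho S) = 3. Proof. by []. Qed.
Lemma rk_lt4 (S : eqType) (c : ext S) : rk c < 4.
Proof. by case: c => // -[[|[|[|k]]] Hk]. Qed.

Lemma count_nseq_rk (S : eqType) (r k : nat) (c : ext S) :
  count (fun x => rk x == r) (nseq k c) = (rk c == r) * k.
Proof. by rewrite count_nseq. Qed.

Lemma count_map_inl (S : eqType) (r : nat) (s : seq S) :
  count (fun x : ext S => rk x == r) (map inl s) = (r == 2) * size s.
Proof.
rewrite count_map; case: (eqVneq r 2) => [->|ne] /=.
  by rewrite mul1n (eq_count (a2 := predT)) ?count_predT.
by rewrite mul0n (eq_count (a2 := pred0)) ?count_pred0 // => x /=; rewrite eq_sym (negbTE ne).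
Qed.

Lemma count_bl (S : eqType) k1 k2 (s : seq S) r :
  count (fun x => rk x == r) (bl k1 k2 s) =
  (r == 0) * k2 + (r == 1) * k1 + (r == 2) * size s + (r == 3) * k1.
Proof.
rewrite /bl /Gpad !count_cat !count_nseq_rk count_map_inl /=.
by rewrite ![_ == r]eq_sym; lia.
Qed.

Lemma sorted_bl (S : eqType) k1 k2 (s : seq S) : sorted (@rle S) (bl k1 k2 s).
Proof.
rewrite sorted_pairwise; last exact: rle_trans.
rewrite /bl /Gpad !pairwise_cat.
have Pn : forall k (c : ext S), pairwise (@rle S) (nseq k c).
  by move=> k c; elim: k => //= k ->; rewrite andbT; apply/allP => x /nseqP [-> _]; rewrite /rle.
rewrite !Pn /=.
have Pm : pairwise (@rle S) (map inl s).
  by rewrite pairwise_map; elim: s => //= x s ->; rewrite andbT; apply/allP => y _; rewrite /rle.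
rewrite Pm !andbT.
apply/and3P; split; apply/allrelP => x y.
- by move=> /nseqP [-> _] _; rewrite /rle rk_mu.
- by move=> /nseqP [-> _]; rewrite mem_cat => /orP [/mapP [z _ ->]|/nseqP [-> _]].
- by move=> /mapP [z _ ->] /nseqP [-> _].
Qed.

Lemma sorted_nseq_mu (S : eqType) k : sorted (@rle S) (nseq k (sym_mu S)).
Proof. by elim: k => //= -[|k] //= ->; rewrite andbT. Qed.

Section Core.
Variable S : eqType.
Variables (n m lx ly k1 k2 : nat) (Xs Ys : nat -> seq S).
Hypothesis Hm : 1 <= m.
Hypothesis Hmn : m <= n.
Hypothesis HX : forall i, i < n -> size (Xs i) = lx.
Hypothesis HY : forall j, j < m -> size (Ys j) = ly.
Hypothesis Hk1 : k1 = 4 * (lx + ly).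
Hypothesis Hk2 : k2 = 2 * k1 + lx.

Let mu := sym_mu S.
Definition ssx := [seq bl k1 k2 (Xs i) | i <- iota 0 n].
Definition ssy := nseq (n * k2) mu :: [seq bl k1 k2 (Ys j) | j <- iota 0 m] ++ [:: nseq (n * k2) mu].

Lemma size_ssx : size ssx = n. Proof. by rewrite size_map size_iota. Qed.
Lemma size_ssy : size ssy = m.+2.
Proof. by rewrite /= size_cat size_map size_iota addn1. Qed.
Lemma nth_ssx i : i < n -> nth [::] ssx i = bl k1 k2 (Xs i).
Proof. by move=> Hi; rewrite (nth_map 0) ?size_iota // nth_iota. Qed.
Lemma nth_ssy j : 0 < j <= m -> nth [::] ssy j = bl k1 k2 (Ys j.-1).
Proof.
case: j => // j /= Hj; rewrite nth_cat size_map size_iota Hj.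
by rewrite (nth_map 0) ?size_iota // nth_iota.
Qed.
Lemma nth_ssy_pad j : (j == 0) || (j == m.+1) -> nth [::] ssy j = nseq (n * k2) mu.
Proof.
case/orP => /eqP -> //=.
by rewrite nth_cat size_map size_iota ltnn subnn.
Qed.

Variable t : seq (trip (ext S)).
Hypothesis Ht1 : pairwise (Rtrip (@rle S)) t.
Hypothesis Ht2 : all (fun e => (e.1.1 < size ssx) && (e.1.2 < size ssy)) t.
Hypothesis Ht3 : forall i, subseq (map snd (filter (fun e => e.1.1 == i) t)) (nth [::] ssx i).
Hypothesis Ht4 : forall j, subseq (map snd (filter (fun e => e.1.2 == j) t)) (nth [::] ssy j).

Definition xt (e : trip (ext S)) := e.1.1.
Definition yt (e : trip (ext S)) := e.1.2.
Definition rt (e : trip (ext S)) := rk e.2.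

Lemma tri e f : e \in t -> f \in t ->
  [\/ e = f, Rtrip (@rle S) e f | Rtrip (@rle S) f e].
Proof.
move=> He Hf.
have x0 := e.
rewrite -(nth_index e He) -(nth_index e Hf).
have Hp := index_mem e t; have Hq := index_mem f t.
rewrite He in Hp; rewrite Hf in Hq.
case: (ltngtP (index e t) (index f t)) => H.
- by apply: Or32; apply: (pairwiseP e Ht1).
- by apply: Or33; apply: (pairwiseP e Ht1).
- by apply: Or31; rewrite H.
Qed.

Lemma RtripE e f : Rtrip (@rle S) e f ->
  [/\ xt e <= xt f, xt e = xt f -> rt e <= rt f, yt e <= yt f & yt e = yt f -> rt e <= rt f].
Proof.
rewrite /Rtrip /tagrel /xt /yt /rt /= => /andP [/andP [H1 H2] /andP [H3 H4]]; split => // E.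
  by move: H2; rewrite E eqxx.
by move: H4; rewrite E eqxx.
Qed.

Lemma cmp e f : e \in t -> f \in t ->
  e = f \/
  (xt e <= xt f /\ (xt e = xt f -> rt e <= rt f) /\ yt e <= yt f /\ (yt e = yt f -> rt e <= rt f)) \/
  (xt f <= xt e /\ (xt f = xt e -> rt f <= rt e) /\ yt f <= yt e /\ (yt f = yt e -> rt f <= rt e)).
Proof.
move=> He Hf; case: (tri He Hf) => [->|/RtripE [? ? ? ?]|/RtripE [? ? ? ?]]; tauto.
Qed.

Lemma xt_lt e : e \in t -> xt e < n.
Proof. by move=> /(allP Ht2) /andP [H _]; rewrite size_ssx in H. Qed.
Lemma yt_lt e : e \in t -> yt e < m.+2.
Proof. by move=> /(allP Ht2) /andP [_ H]; rewrite size_ssy in H. Qed.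


Lemma cntX i (P : pred (ext S)) :
  count (fun e => (xt e == i) && P e.2) t = count P (map snd (filter (fun e => e.1.1 == i) t)).
Proof. by rewrite count_map count_filter; apply: eq_count => e /=; rewrite andbC. Qed.
Lemma cntY j (P : pred (ext S)) :
  count (fun e => (yt e == j) && P e.2) t = count P (map snd (filter (fun e => e.1.2 == j) t)).
Proof. by rewrite count_map count_filter; apply: eq_count => e /=; rewrite andbC. Qed.

Lemma cntX_bl i r : i < n ->
  count (fun e => (xt e == i) && (rt e == r)) t <= count (fun c => rk c == r) (bl k1 k2 (Xs i)).
Proof. by move=> Hi; rewrite (cntX i (fun c => rk c == r)) -nth_ssx //; apply: leq_count_subseq. Qed.
Lemma cntY_bl j r : 0 < j <= m ->
  count (fun e => (yt e == j) && (rt e == r)) t <= count (fun c => rk c == r) (bl k1 k2 (Ys j.-1)).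
Proof. by move=> Hj; rewrite (cntY j (fun c => rk c == r)) -nth_ssy //; apply: leq_count_subseq. Qed.

Lemma yt_range e : e \in t -> rt e != 0 -> 0 < yt e <= m.
Proof.
move=> He Hr.
have Hy := yt_lt He.
suff : (yt e != 0) && (yt e != m.+1) by move=> /andP [H1 H2]; apply/andP; split; lia.
apply/negP => Hbad.
have Hpad : (yt e == 0) || (yt e == m.+1) by move: Hbad; case: (yt e == 0); case: (yt e == m.+1).
have := Ht4 (yt e); rewrite nth_ssy_pad // => /(leq_count_subseq (fun c => rk c != 0)).
rewrite count_nseq /= mul0n leqn0 => /eqP.
rewrite -(cntY (yt e) (fun c => rk c != 0)) => /eqP; rewrite -leqn0 leqNgt -has_count => /hasP; apply.
by exists e => //; rewrite eqxx.
Qed.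

Definition hasS i := has (fun e => (xt e == i) && (rt e == 2)) t.
Definition Jl i := [seq yt e | e <- t & (xt e == i) && (rt e == 2)].
Definition J i := foldr minn m.+2 (Jl i).

Lemma J_wit i : hasS i -> exists2 f, f \in t & [/\ xt f = i, rt f = 2 & yt f = J i].
Proof.
move=> H.
have Hne : Jl i != [::].
  by rewrite /Jl -size_eq0 size_map size_filter -lt0n -has_count.
have Hall : all (fun x => x < m.+2) (Jl i).
  by apply/allP => x /mapP [e]; rewrite mem_filter => /andP [_ He] ->; apply: yt_lt.
have /mapP [f] := foldr_minn_mem Hne Hall.
rewrite mem_filter => /andP [/andP [/eqP H1 /eqP H2] Hf] E.
by exists f.
Qed.

Lemma J_min e : e \in t -> rt e = 2 -> J (xt e) <= yt e.
Proof.
move=> He Hr; apply: foldr_minn_le; apply/mapP; exists e => //.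
by rewrite mem_filter eqxx Hr eqxx.
Qed.

Lemma hasS_of e : e \in t -> rt e = 2 -> hasS (xt e).
Proof. by move=> He Hr; apply/hasP; exists e => //; rewrite eqxx Hr. Qed.

Lemma J_range i : hasS i -> 0 < J i <= m.
Proof. by move=> /J_wit [f Hf [_ Hr <-]]; apply: yt_range => //; rewrite Hr. Qed.

Lemma J_mono i i' : hasS i -> hasS i' -> i < i' -> J i <= J i'.
Proof.
move=> /J_wit [f Hf [Hx Hr Hy]] /J_wit [f' Hf' [Hx' Hr' Hy']] Hii.
rewrite -Hy -Hy'.
case: (cmp Hf Hf') => [E|[[H1 [H2 [H3 H4]]]|[H1 [H2 [H3 H4]]]]].
- by subst f'; rewrite Hx in Hx'; subst i'; rewrite ltnn in Hii.
- exact: H3.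
- by rewrite Hx Hx' in H1; rewrite leqNgt Hii in H1.
Qed.


Definition inL i := hasS i && all (fun i0 => ~~ hasS i0 || (J i0 != J i)) (iota 0 i).

Lemma L2 i : hasS i -> ~~ inL i -> forall g, g \in t -> xt g = i -> rt g != 0.
Proof.
move=> Hi; rewrite /inL Hi /= => /allPn [i0]; rewrite mem_iota /= => Hi0.
rewrite negb_or negbK negbK => /andP [Hs0 /eqP EJ] g Hg Hx; apply/eqP => Hr.
have [f0 Hf0 [Hx0 Hr0 Hy0]] := J_wit Hs0.
have [f1 Hf1 [Hx1 Hr1 Hy1]] := J_wit Hi.
have A : yt g <= J i.
  case: (cmp Hg Hf1) => [E|[[_ [_ [H _]]]|[_ [H _]]]].
  - by subst; rewrite Hr in Hr1.
  - by rewrite -Hy1.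
  - by move: (H (etrans Hx1 (esym Hx))); rewrite Hr1 Hr.
have B : J i <= yt g.
  case: (cmp Hg Hf0) => [E|[[H _]|[_ [_ [H H']]]]].
  - by subst; rewrite Hr in Hr0.
  - by rewrite Hx Hx0 in H; lia.
  - rewrite -EJ -Hy0 //.
have E : yt f0 = yt g by lia.
case: (cmp Hg Hf0) => [E'|[[H _]|[_ [_ [_ H']]]]].
- by subst; rewrite Hr in Hr0.
- by rewrite Hx Hx0 in H; lia.
- by move: (H' E); rewrite Hr0 Hr.
Qed.

Lemma L3 e : e \in t -> rt e = 2 -> yt e != J (xt e) ->
  forall g, g \in t -> yt g = yt e -> rt g != 1.
Proof.
move=> He Hr Hne g Hg Hy; apply/eqP => Hg1.
have Hs := hasS_of He Hr.
have [f0 Hf0 [Hx0 Hr0 Hy0]] := J_wit Hs.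
have Hlt : J (xt e) < yt e by have := J_min He Hr; move: Hne => /eqP; lia.
case: (cmp Hg He) => [E|[[H1 [H2 [H3 H4]]]|[H1 [H2 [H3 H4]]]]].
- by subst; rewrite Hr in Hg1.
-
  case: (cmp Hg Hf0) => [E|[[K1 [K2 [K3 K4]]]|[K1 [K2 [K3 K4]]]]].
  + by subst; rewrite Hr0 in Hg1.
  + by rewrite Hy0 in K3; lia.
  + have Ex : xt f0 = xt g by rewrite Hx0 in K1 *; lia.
    by move: (K2 Ex); rewrite Hr0 Hg1.
- by move: (H4 (esym Hy)); rewrite Hr Hg1.
Qed.

Lemma L4 a1 a2 g : hasS a1 -> hasS a2 -> g \in t -> rt g = 0 -> a1 < xt g <= a2 ->
  J a1 < yt g <= J a2.
Proof.
move=> H1 H2 Hg Hr /andP [Ha1 Ha2].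
have [f1 Hf1 [Hx1 Hr1 Hy1]] := J_wit H1.
have [f2 Hf2 [Hx2 Hr2 Hy2]] := J_wit H2.
apply/andP; split.
  case: (cmp Hg Hf1) => [E|[[K1 _]|[K1 [K2 [K3 K4]]]]].
  - by subst; rewrite Hr in Hr1.
  - by rewrite Hx1 in K1; lia.
  - rewrite -Hy1; rewrite leq_eqVlt in K3; case/orP: K3 => // /eqP E.
    by move: (K4 E); rewrite Hr1 Hr.
case: (cmp Hg Hf2) => [E|[[K1 [K2 [K3 K4]]]|[K1 [K2 [K3 K4]]]]].
- by subst; rewrite Hr in Hr2.
- by rewrite -Hy2.
- have Ex : xt f2 = xt g by rewrite Hx2 in K1 *; lia.
  by move: (K2 Ex); rewrite Hr2 Hr.
Qed.


Definition getl (c : ext S) : option S := if c is inl a then Some a else None.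

Lemma inl_getl (w : seq (ext S)) : all (fun c => rk c == 2) w -> map inl (pmap getl w) = w.
Proof. elim: w => //= c w IH /andP [Hc Hw]; case: c Hc => [a|o] /= Hc; first by rewrite IH. by move: Hc; case: o => -[|[|[|k]]] Hk. Qed.

Lemma filter_bl2 (s : seq S) : filter (fun c => rk c == 2) (bl k1 k2 s) = map inl s.
Proof.
rewrite /bl /Gpad !filter_cat !filter_nseq /= cats0 /=.
by rewrite (eq_in_filter (a2 := predT)) ?filter_predT // => x /mapP [z _ ->].
Qed.

Lemma subseq_filter_imp (T : eqType) (P Q : pred T) (s : seq T) :
  (forall e, P e -> Q e) -> subseq (filter P s) (filter Q s).
Proof.
move=> H; have -> : filter P s = filter P (filter Q s).
  rewrite -filter_predI; apply: eq_filter => e /=; case E: (P e) => //=; by rewrite (H e E).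
exact: filter_subseq.
Qed.

Lemma inl_inj' : injective (@inl S 'I_3).
Proof. by move=> a b []. Qed.

Definition cS i := count (fun e => [&& xt e == i, rt e == 2 & yt e == J i]) t.

Lemma cS_sub i : exists2 w : seq S, size w = cS i &
  (i < n -> subseq w (Xs i)) /\ (0 < J i <= m -> subseq w (Ys (J i).-1)).
Proof.
pose P e := [&& xt e == i, rt e == 2 & yt e == J i].
pose w := map snd (filter P t).
have Hw2 : all (fun c => rk c == 2) w.
  by apply/allP => c /mapP [e]; rewrite mem_filter /P => /andP [/and3P [_ H _] _] ->.
exists (pmap getl w).
  by rewrite -(size_map (@inl S (ordinal 3))) inl_getl // size_map size_filter.
split => H.
- apply: (@subseq_map_inj S (ext S) inl _ _ inl_inj'); rewrite inl_getl //.
  rewrite -filter_bl2; rewrite subseq_filter Hw2 /=.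
  rewrite -nth_ssx //; apply: subseq_trans (Ht3 i).
  apply: map_subseq; by apply: subseq_filter_imp => e /and3P [-> _ _].
- apply: (@subseq_map_inj S (ext S) inl _ _ inl_inj'); rewrite inl_getl //.
  rewrite -filter_bl2; rewrite subseq_filter Hw2 /=.
  rewrite -nth_ssy //; apply: subseq_trans (Ht4 (J i)).
  apply: map_subseq; by apply: subseq_filter_imp => e /and3P [_ _ ->].
Qed.

Lemma cS_lx i : i < n -> cS i <= lx.
Proof.
move=> Hi; have [w <- [H _]] := cS_sub i.
by rewrite -(HX Hi); apply: size_subseq; apply: H.
Qed.

Lemma cS_lcs i : i < n -> hasS i -> cS i <= lcs (Xs i) (Ys (J i).-1).
Proof.
move=> Hi Hs; have [w <- [H1 H2]] := cS_sub i.
by apply: lcs_ub; [apply: H1|apply: H2; apply: J_range].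
Qed.

Lemma cS_nohas i : ~~ hasS i -> cS i = 0.
Proof.
move=> Hn; apply/eqP; rewrite -leqn0 leqNgt -has_count; apply: contra Hn => /hasP [e He /and3P [H1 H2 _]].
by apply/hasP; exists e => //; rewrite H1 H2.
Qed.


Definition Mu i := count (fun e => (xt e == i) && (rt e == 0)) t.
Definition SRY j := count (fun e => (yt e == j) && ((rt e == 1) || (rt e == 3))) t.
Definition eY j := count (fun e => [&& yt e == j, rt e == 2 & yt e != J (xt e)]) t.

Lemma count4 (T : Type) (p1 p2 p3 p4 : pred T) (s : seq T) :
  (forall e, p1 e + p2 e + p3 e + p4 e = 1) ->
  size s = count p1 s + count p2 s + count p3 s + count p4 s.
Proof. move=> H; elim: s => //= x s ->; have := H x; lia. Qed.

Lemma size_decomp : size t =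
  \sum_(0 <= i < n) (Mu i + cS i) + \sum_(1 <= j < m.+1) (SRY j + eY j).
Proof.
rewrite (@count4 _ (fun e => rt e == 0) (fun e => (rt e == 1) || (rt e == 3))
   (fun e => (rt e == 2) && (yt e == J (xt e))) (fun e => (rt e == 2) && (yt e != J (xt e)))); last first.
  move=> e; have := rk_lt4 e.2; rewrite /rt.
  by case: (rk e.2) => [|[|[|[|k]]]] //= _; case: (yt e == J (xt e)).
rewrite !big_split /=.
rewrite (@count_split _ _ xt 0 n); last by move=> e He _; apply: xt_lt.
rewrite (@count_split _ (fun e => (rt e == 1) || (rt e == 3)) yt 1 m.+1); last first.
  by move=> e He Hr; apply: yt_range => //; move: Hr; case: (rt e) => [|[|[|[|k]]]].
rewrite (@count_split _ (fun e => (rt e == 2) && (yt e == J (xt e))) xt 0 n); last by move=> e He _; apply: xt_lt.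
rewrite (@count_split _ (fun e => (rt e == 2) && (yt e != J (xt e))) yt 1 m.+1); last first.
  by move=> e He /andP [Hr _]; apply: yt_range => //; rewrite (eqP Hr).
have E1 : \sum_(0 <= i < n) count (fun e => (rt e == 0) && (xt e == i)) t = \sum_(0 <= i < n) Mu i.
  by apply: eq_bigr => i _; apply: eq_count => e; rewrite andbC.
have E2 : \sum_(1 <= j < m.+1) count (fun e => ((rt e == 1) || (rt e == 3)) && (yt e == j)) t
   = \sum_(1 <= j < m.+1) SRY j.
  by apply: eq_bigr => i _; apply: eq_count => e; rewrite andbC.
have E3 : \sum_(0 <= i < n) count (fun e => ((rt e == 2) && (yt e == J (xt e))) && (xt e == i)) t
   = \sum_(0 <= i < n) cS i.
  apply: eq_bigr => i _; apply: eq_count => e /=.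
  by case: (eqVneq (xt e) i) => [->|]; rewrite ?andbF ?andbT // andbC andbA.
have E4 : \sum_(1 <= j < m.+1) count (fun e => ((rt e == 2) && (yt e != J (xt e))) && (yt e == j)) t
   = \sum_(1 <= j < m.+1) eY j.
  apply: eq_bigr => i _; apply: eq_count => e /=.
  by rewrite andbC andbA.
rewrite E1 E2 E3 E4; lia.
Qed.

Lemma Mu_le i : i < n -> Mu i <= k2.
Proof. by move=> Hi; apply: leq_trans (cntX_bl 0 Hi) _; rewrite count_bl /=; lia. Qed.

Lemma SRY_eY j : 0 < j <= m -> SRY j + eY j <= 2 * k1.
Proof.
move=> Hj.
have Hs : count (fun e => (yt e == j) && (rt e == 1)) t <= k1.
  by apply: leq_trans (cntY_bl 1 Hj) _; rewrite count_bl /=; lia.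
have Hr : count (fun e => (yt e == j) && (rt e == 3)) t <= k1.
  by apply: leq_trans (cntY_bl 3 Hj) _; rewrite count_bl /=; lia.
have HS : eY j <= ly.
  apply: leq_trans (_ : count (fun e => (yt e == j) && (rt e == 2)) t <= _).
    by apply: sub_count => e /and3P [-> -> _].
  apply: leq_trans (cntY_bl 2 Hj) _; rewrite count_bl /= HY; lia.
have Esr : SRY j = count (fun e => (yt e == j) && (rt e == 1)) t +
                   count (fun e => (yt e == j) && (rt e == 3)) t.
  rewrite -count_predUI; rewrite (@eq_count _ (predI _ _) pred0) ?count_pred0.
    by rewrite addn0; apply: eq_count => e /=; rewrite andb_orr.
  move=> e /=; apply/negP => /andP [/andP [_ /eqP A] /andP [_ /eqP B]]; by rewrite A in B.
case: (posnP (eY j)) => He.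
  by rewrite He Esr; lia.
have Hs0 : count (fun e => (yt e == j) && (rt e == 1)) t = 0.
  move: He; rewrite /eY -has_count => /hasP [e Het /and3P [/eqP Hy Hr2 Hne]].
  apply/eqP; rewrite -leqn0 leqNgt -has_count; apply/negP => /hasP [g Hg /andP [/eqP Hgy Hg1]].
  by move: (L3 Het (eqP Hr2) Hne Hg (etrans Hgy (esym Hy))); rewrite Hg1.
rewrite Esr Hs0; lia.
Qed.


Definition F := [seq i <- iota 0 n | inL i].
Definition gL i := (i, (J i).-1).
Definition Lam := map gL F.

Lemma inL_hasS i : inL i -> hasS i. Proof. by case/andP. Qed.

Lemma mem_F i : (i \in F) = (i < n) && inL i.
Proof. by rewrite mem_filter mem_iota /= andbC. Qed.

Lemma J_strict i i' : inL i -> inL i' -> i < i' -> J i < J i'.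
Proof.
move=> Hi Hi' Hii.
have H1 := J_mono (inL_hasS Hi) (inL_hasS Hi') Hii.
move: Hi' => /andP [_ /allP /(_ i)]; rewrite mem_iota /= Hii => /(_ isT).
rewrite (inL_hasS Hi) /= => Hne.
by rewrite ltn_neqAle Hne H1.
Qed.

Lemma F_pairwise : pairwise (fun i i' => (i < i') && ((J i).-1 < (J i').-1)) F.
Proof.
have HF : pairwise ltn F.
  rewrite -sorted_pairwise; last exact: ltn_trans.
  apply: sorted_filter; first exact: ltn_trans.
  exact: iota_ltn_sorted.
apply: (sub_in_pairwise (P := fun i => i \in F)) HF; last by apply/allP.
move=> i i'; rewrite !mem_F => /andP [_ Hi] /andP [_ Hi'] /= Hii.
rewrite Hii /=.
have := J_strict Hi Hi' Hii; have := J_range (inL_hasS Hi); lia.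
Qed.

Lemma Lam_align : alignment n m Lam.
Proof.
apply/andP; split.
  apply/allP => p /mapP [i]; rewrite mem_F => /andP [Hn Hi] ->; rewrite /gL /= Hn /=.
  have := J_range (inL_hasS Hi); lia.
apply: pairwise_sorted; rewrite /Lam pairwise_map.
by apply: sub_pairwise F_pairwise.
Qed.

Lemma size_F : size F <= m.
Proof.
rewrite -(size_map (fun i => (J i).-1)); apply: sorted_ltn_size.
  apply: pairwise_sorted; rewrite pairwise_map.
  by apply: sub_pairwise F_pairwise => i i' /andP [].
apply/allP => x /mapP [i]; rewrite mem_F => /andP [_ Hi] ->.
have := J_range (inL_hasS Hi); lia.
Qed.

Lemma sum_ind (T : Type) (P : pred T) (r : seq T) : \sum_(i <- r) (P i : nat) = count P r.
Proof. by elim: r => [|x r IH]; rewrite ?big_nil ?big_cons ?IH. Qed.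

Lemma size_F_sum : size F = \sum_(0 <= i < n) (inL i : nat).
Proof. by rewrite (sum_ind inL) size_filter /index_iota subn0. Qed.


Lemma Mu0 i : hasS i -> ~~ inL i -> Mu i = 0.
Proof.
move=> H1 H2; apply/eqP; rewrite -leqn0 leqNgt -has_count; apply/negP => /hasP [g Hg /andP [/eqP Hx /eqP Hr]].
by move: (L2 H1 H2 Hg Hx); rewrite Hr.
Qed.

Definition dl i := delta (Xs i) (Ys (J i).-1).
Definition val i := 2 * (Mu i + cS i) + inL i * dl i.
Definition Rv i := 2 * k2 + inL i * (lx + ly).

Lemma delta_lcs (U V : seq S) : delta U V + 2 * lcs U V = size U + size V.
Proof. rewrite /delta; have := lcs_size_l U V; have := lcs_size_r U V; lia. Qed.

Lemma per_i i : i < n -> val i <= Rv i /\ 4 * k1 * (k2 - Mu i) + k2 * val i <= k2 * Rv i.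
Proof.
move=> Hi; rewrite /val /Rv.
have HM := Mu_le Hi.
have Hk : 2 * k1 <= k2 by lia.
case Hin: (inL i).
  have Hs := inL_hasS Hin.
  have Hc := cS_lcs Hi Hs.
  have HJ := J_range Hs.
  have Hd := delta_lcs (Xs i) (Ys (J i).-1).
  rewrite HX // HY in Hd; last by lia.
  rewrite /dl !mul1n.
  set M := Mu i in HM *; set c := cS i in Hc *; set L := lcs _ _ in Hc Hd *; set d := delta _ _ in Hd *.
  split; first by lia.
  have -> : 2 * (M + c) + d = 2 * M + 2 * c + d by lia.
  have E1 : k2 * (2 * k2 + (lx + ly)) = k2 * (2 * M + 2 * L + d) + 2 * k2 * (k2 - M) by nia.
  have E2 : k2 * (2 * M + 2 * c + d) <= k2 * (2 * M + 2 * L + d) by apply: leq_mul => //; lia.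
  have E3 : 4 * k1 * (k2 - M) <= 2 * k2 * (k2 - M) by apply: leq_mul => //; lia.
  lia.
rewrite !mul0n !addn0.
case Hs: (hasS i).
  have -> : Mu i = 0 by apply: Mu0 => //; rewrite Hin.
  have Hc := cS_lx Hi.
  set c := cS i in Hc *.
  split; first by lia.
  rewrite subn0.
  have E : k2 * (2 * (0 + c)) <= k2 * (2 * lx) by apply: leq_mul => //; lia.
  have E' : k2 * (2 * k2) = 4 * k1 * k2 + k2 * (2 * lx) by nia.
  lia.
have -> : cS i = 0 by apply: cS_nohas; rewrite Hs.
set M := Mu i in HM *.
split; first by lia.
have E1 : k2 * (2 * k2) = k2 * (2 * (M + 0)) + 2 * k2 * (k2 - M) by nia.
have E3 : 4 * k1 * (k2 - M) <= 2 * k2 * (k2 - M) by apply: leq_mul => //; lia.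
lia.
Qed.


Lemma Mu_range a1 am : inL a1 -> inL am ->
  \sum_(a1.+1 <= i < am.+1) Mu i <= (m.-1) * k2.
Proof.
move=> H1 H2.
have Hs1 := inL_hasS H1; have Hs2 := inL_hasS H2.
have HJ1 := J_range Hs1; have HJ2 := J_range Hs2.
pose p e := (rt e == 0) && (a1 < xt e <= am).
have -> : \sum_(a1.+1 <= i < am.+1) Mu i = count p t.
  rewrite (@count_split _ p xt a1.+1 am.+1); last first.
    by move=> e _ /andP [_ /andP [A B]]; apply/andP; split; lia.
  apply: eq_big_nat => i /andP [A B]; apply: eq_count => e.
  rewrite /p; case: (eqVneq (xt e) i) => [->|]; rewrite ?andbF ?andbT //.
  have -> : (a1 < i <= am) = true by apply/andP; split; lia.
  by rewrite /= ?andbT ?eqxx.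
rewrite (@count_split _ p yt 2 m.+1); last first.
  move=> e He /andP [/eqP Hr Hx].
  have := L4 Hs1 Hs2 He Hr Hx; lia.
apply: leq_trans (_ : \sum_(2 <= j < m.+1) k2 <= _); last by rewrite sum_nat_const_nat; lia.
rewrite big_nat_cond [X in _ <= X]big_nat_cond; apply: leq_sum => j /andP [/andP [A B] _].
apply: leq_trans (_ : count (fun e => (yt e == j) && (rt e == 0)) t <= _).
  by apply: sub_count => e /andP [/andP [-> _] ->].
apply: leq_trans (cntY_bl 0 _) _; first by apply/andP; split; lia.
by rewrite count_bl /=; lia.
Qed.


Lemma gamma_le : gamma n m Xs Ys <= lx + ly.
Proof.
rewrite /gamma; apply/bigmax_leqP => i _; apply/bigmax_leqP => j _.
by rewrite /delta HX // HY //; lia.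
Qed.

Lemma sub_range_sum (f : nat -> nat) a b c d : a <= c -> c <= d -> d <= b ->
  \sum_(c <= i < d) f i <= \sum_(a <= i < b) f i.
Proof.
move=> H1 H2 H3.
rewrite (@big_cat_nat _ _ _ c a b) //; last by lia.
rewrite (@big_cat_nat _ _ _ d c b) //.
exact: leq_trans (leq_addr _ _) (leq_addl _ _).
Qed.

Lemma cost_sum : \sum_(p <- Lam) delta (Xs p.1) (Ys p.2) = \sum_(0 <= i < n) inL i * dl i.
Proof.
rewrite big_map big_filter big_mkcond /= /index_iota subn0.
by apply: eq_bigr => i _; case: (inL i); rewrite ?mul1n ?mul0n.
Qed.

Theorem core : exists2 L, alignment n m L &
  2 * size t + cost n m Xs Ys L <= 2 * n * k2 + m * (k2 + 2 * k1 + ly).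
Proof.
exists Lam; first exact: Lam_align.
have Hsize : size t <= \sum_(0 <= i < n) (Mu i + cS i) + 2 * m * k1.
  rewrite size_decomp leq_add2l.
  apply: leq_trans (_ : \sum_(1 <= j < m.+1) (2 * k1) <= _).
    rewrite big_nat_cond [X in _ <= X]big_nat_cond; apply: leq_sum => j /andP [/andP [A B] _].
    by apply: SRY_eY; apply/andP; split; lia.
  by rewrite sum_nat_const_nat; lia.
have Hval : \sum_(0 <= i < n) val i = 2 * \sum_(0 <= i < n) (Mu i + cS i) + \sum_(0 <= i < n) inL i * dl i.
  by rewrite /val big_split /= big_distrr.
have HRv : \sum_(0 <= i < n) Rv i = 2 * n * k2 + size F * (lx + ly).
  rewrite /Rv big_split /= sum_nat_const_nat size_F_sum big_distrl /=; lia.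
have H5 : \sum_(0 <= i < n) val i <= \sum_(0 <= i < n) Rv i.
  rewrite big_nat_cond [X in _ <= X]big_nat_cond; apply: leq_sum => i /andP [/andP [A B] _].
  by case: (per_i B).
have H6 : \sum_(0 <= i < n) (4 * k1 * (k2 - Mu i)) + k2 * \sum_(0 <= i < n) val i
           <= k2 * \sum_(0 <= i < n) Rv i.
  rewrite !big_distrr -big_split /=.
  rewrite big_nat_cond [X in _ <= X]big_nat_cond; apply: leq_sum => i /andP [/andP [A B] _].
  by case: (per_i B).
have Hg := gamma_le.
have HF := size_F.
rewrite /cost cost_sum /Lam size_map.
case: ltnP => Hk.
  have E2 : (m - size F) * gamma n m Xs Ys <= (m - size F) * (lx + ly) by apply: leq_mul.
  have E3 : m * (lx + ly) = size F * (lx + ly) + (m - size F) * (lx + ly) by rewrite -mulnDl subnKC // ltnW.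
  have R1 : m * (k2 + 2 * k1 + ly) = m * k2 + 2 * (m * k1) + m * ly by nia.
  have R2 : m * k2 = 2 * (m * k1) + m * lx by rewrite Hk2; nia.
  have R3 : m * (lx + ly) = m * lx + m * ly by nia.
  rewrite -mulnA in Hsize.
  move: Hsize Hval HRv H5 E2 E3 R1 R2 R3.
  set A := size t; set B := \sum_(0 <= i < n) (Mu i + cS i); set Cd := \sum_(0 <= i < n) inL i * dl i.
  set V := \sum_(0 <= i < n) val i; set R := \sum_(0 <= i < n) Rv i.
  set g := gamma n m Xs Ys; set k := size F.
  lia.
have HFm : size F = m by apply/eqP; rewrite eqn_leq HF Hk.
have HFs : sorted ltn F.
  by apply: pairwise_sorted; apply: sub_pairwise F_pairwise => i i' /andP [].
have HFne : F != [::] by rewrite -size_eq0 HFm; lia.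
have Ha1F := head_mem0 HFne.
have HamF := last_mem0 HFne.
have Hh : (head (0, 0) (map gL F)).1 = head 0 F by apply: head_map_fst.
have Hl : (last (0, 0) (map gL F)).1 = last 0 F by apply: last_map_fst.
have Hspan : head 0 F + (m - 1) <= last 0 F by have := sorted_span HFs HFne; rewrite HFm.
rewrite Hh Hl.
set a1 := head 0 F in Ha1F Hspan *; set am := last 0 F in HamF Hspan *.
move: Ha1F HamF; rewrite !mem_F => /andP [Ha1n Ha1L] /andP [Hamn HamL].
have HMr := Mu_range Ha1L HamL.
have Hsplit : \sum_(a1.+1 <= i < am.+1) (k2 - Mu i) + \sum_(a1.+1 <= i < am.+1) Mu i = (am - a1) * k2.
  rewrite -big_split /=.
  rewrite (@eq_big_nat _ _ _ a1.+1 am.+1 _ (fun _ => k2)); first by rewrite sum_nat_const_nat; congr (_ * _); lia.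
  move=> i /andP [A B]; rewrite subnK //; apply: Mu_le; lia.
have H7 : \sum_(a1.+1 <= i < am.+1) (4 * k1 * (k2 - Mu i)) <= \sum_(0 <= i < n) (4 * k1 * (k2 - Mu i)).
  by apply: sub_range_sum; lia.
rewrite -big_distrr /= in H7.
set gap := am - a1 + 1 - m.
have Hgap : gap * k2 <= \sum_(a1.+1 <= i < am.+1) (k2 - Mu i).
  have : (m.-1) * k2 + gap * k2 <= (am - a1) * k2 by rewrite -mulnDl leq_mul2r; apply/orP; right; lia.
  lia.
have H8 : k2 * (4 * k1 * gap) + k2 * \sum_(0 <= i < n) val i <= k2 * \sum_(0 <= i < n) Rv i.
  apply: leq_trans H6; rewrite leq_add2r.
  apply: leq_trans _ H7; have -> : k2 * (4 * k1 * gap) = 4 * k1 * (gap * k2) by rewrite [k2 * _]mulnC -mulnA.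
  by rewrite leq_mul2l Hgap orbT.
have H9 : 4 * k1 * gap + \sum_(0 <= i < n) val i <= \sum_(0 <= i < n) Rv i \/ k2 = 0.
  case: (posnP k2) => Hk2p; first by right.
  by left; rewrite -(leq_pmul2l Hk2p) mulnDr.
have Hgg : gap * gamma n m Xs Ys <= gap * (4 * k1) by apply: leq_mul => //; lia.
have R1 : m * (k2 + 2 * k1 + ly) = m * k2 + 2 * (m * k1) + m * ly by nia.
have R2 : m * k2 = 2 * (m * k1) + m * lx by rewrite Hk2; nia.
have R3 : m * (lx + ly) = m * lx + m * ly by nia.
have R4 : gap * (4 * k1) = 4 * k1 * gap by rewrite mulnC.
rewrite -mulnA in Hsize.
rewrite HFm in HRv.
case: H9 => H9.
  move: Hsize Hval HRv H5 H9 Hgg R1 R2 R3 R4; lia.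
have Hg0 : gamma n m Xs Ys = 0 by lia.
rewrite Hg0 muln0.
move: Hsize Hval HRv H5 R1 R2 R3; lia.
Qed.

End Core.

Lemma lcs_cat (T : eqType) (p q P Q : seq T) : lcs p q + lcs P Q <= lcs (p ++ P) (q ++ Q).
Proof.
have [w1 [H1 H2] <-] := lcs_witness p q.
have [w2 [H3 H4] <-] := lcs_witness P Q.
by rewrite -size_cat; apply: lcs_ub; apply: cat_subseq.
Qed.

Lemma lcs_mono (T : eqType) (U V V' : seq T) : subseq V V' -> lcs U V <= lcs U V'.
Proof.
move=> H; have [w [H1 H2] <-] := lcs_witness U V.
by apply: lcs_ub => //; apply: subseq_trans H.
Qed.

Lemma lcs_refl (T : eqType) (U : seq T) : size U <= lcs U U.
Proof. by apply: lcs_ub. Qed.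

Lemma lcs_map (T T' : eqType) (f : T -> T') (U V : seq T) : lcs U V <= lcs (map f U) (map f V).
Proof.
have [w [H1 H2] <-] := lcs_witness U V.
by rewrite -(size_map f); apply: lcs_ub; apply: map_subseq.
Qed.

Lemma lcs_flatten (T : eqType) (ps qs : seq (seq T)) : size ps = size qs ->
  \sum_(k < size ps) lcs (nth [::] ps k) (nth [::] qs k) <= lcs (flatten ps) (flatten qs).
Proof.
elim: ps qs => [|p ps IH] [|q qs] //= E; first by rewrite big_ord0.
have {}E : size ps = size qs by lia.
rewrite big_ord_recl /=.
apply: leq_trans (lcs_cat p q _ _); rewrite leq_add2l.
have := IH qs E; apply: leq_trans; apply: leq_sum => k _.
by [].
Qed.

Lemma size_flatten_const (T : Type) (g : nat -> seq T) c a k :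
  (forall i, a <= i < a + k -> size (g i) = c) -> size (flatten (map g (iota a k))) = k * c.
Proof.
elim: k a => [|k IH] a H //=.
rewrite size_cat H ?IH; first lia.
  by move=> i Hi; apply: H; lia.
lia.
Qed.

Lemma size_bl (S : eqType) k1 k2 (s : seq S) : size (bl k1 k2 s) = k2 + 2 * k1 + size s.
Proof. rewrite /bl /Gpad !size_cat !size_nseq size_map; lia. Qed.

Lemma lcs_bl (S : eqType) k1 k2 (x y : seq S) :
  k2 + 2 * k1 + lcs x y <= lcs (bl k1 k2 x) (bl k1 k2 y).
Proof.
rewrite /bl /Gpad.
apply: leq_trans (lcs_cat _ _ _ _).
have E1 := lcs_refl (nseq k2 (sym_mu S)); rewrite size_nseq in E1.
have E2 := lcs_refl (nseq k1 (sym_sigma S)); rewrite size_nseq in E2.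
have E3 := lcs_refl (nseq k1 (sym_rho S)); rewrite size_nseq in E3.
have E4 := lcs_map (@inl S 'I_3) x y.
rewrite -addnA; apply: leq_add; first exact: E1.
apply: leq_trans (lcs_cat _ _ _ _).
rewrite mul2n -addnn -addnA; apply: leq_add; first exact: E2.
apply: leq_trans (lcs_cat _ _ _ _).
by rewrite addnC; apply: leq_add.
Qed.


Lemma delta_lcs' (T : eqType) (U V : seq T) : delta U V + 2 * lcs U V = size U + size V.
Proof. rewrite /delta; have := lcs_size_l U V; have := lcs_size_r U V; lia. Qed.

Lemma nseq_subseq (T : eqType) (x : T) a b : a <= b -> subseq (nseq a x) (nseq b x).
Proof. move=> H; rewrite -(subnKC H) nseqD; exact: prefix_subseq. Qed.

Lemma nseq_sub_blocks (S : eqType) k1 k2 (Xs : nat -> seq S) a k :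
  subseq (nseq (k * k2) (sym_mu S)) (flatten [seq bl k1 k2 (Xs i) | i <- iota a k]).
Proof.
elim: k a => [|k IH] a //=.
rewrite mulSn nseqD /bl -catA; apply: cat_subseq => //.
apply: subseq_trans (IH a.+1) (suffix_subseq _ _).
Qed.

Lemma sum_ord_iota (f : nat -> nat) k : \sum_(j < k) f j = \sum_(j <- iota 0 k) f j.
Proof. by rewrite -(big_mkord xpredT) /index_iota subn0. Qed.

Section Main.
Variable S : eqType.
Variables (n m lx ly : nat) (Xs Ys : nat -> seq S).
Hypothesis Hm : 1 <= m.
Hypothesis Hmn : m <= n.
Hypothesis HX : forall i, i < n -> size (Xs i) = lx.
Hypothesis HY : forall j, j < m -> size (Ys j) = ly.
Let k1 := 4 * (lx + ly).
Let k2 := 2 * k1 + lx.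

Let FX := flatten (ssx n k1 k2 Xs).
Let YY := flatten (ssy n m k1 k2 Ys).

Lemma FX_eq : FX = nseq k2 (sym_mu S) ++ bigX k1 k2 n Xs.
Proof.
rewrite /FX /ssx /bigX; case: n Hmn Hm => [|n'] //; first by case: m.
by move=> _ _; rewrite /= /bl catA.
Qed.

Lemma YY_eq : YY = nseq k2 (sym_mu S) ++ bigY k1 k2 n m Ys.
Proof.
rewrite /YY /ssy /bigY /=; case: m Hm => [|m'] // _.
rewrite /= flatten_cat /= cats0 /bl.
rewrite !catA -nseqD addnC nseqD -!catA; congr (_ ++ _).
Qed.

Lemma delta_eq : delta (bigX k1 k2 n Xs) (bigY k1 k2 n m Ys) = delta FX YY.
Proof.
rewrite FX_eq YY_eq /delta lcs_nseq.
have E1 : size (nseq k2 (sym_mu S) ++ bigX k1 k2 n Xs) = k2 + size (bigX k1 k2 n Xs) by rewrite size_cat size_nseq.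
have E2 : size (nseq k2 (sym_mu S) ++ bigY k1 k2 n m Ys) = k2 + size (bigY k1 k2 n m Ys) by rewrite size_cat size_nseq.
rewrite E1 E2; lia.
Qed.

Lemma size_FX : size FX = n * (2 * k2).
Proof.
rewrite /FX /ssx (@size_flatten_const _ _ (k2 + 2 * k1 + lx)); first by rewrite /k2; lia.
by move=> i /andP [_ Hi]; rewrite size_bl HX.
Qed.

Lemma size_YY : size YY = 2 * n * k2 + m * (k2 + 2 * k1 + ly).
Proof.
rewrite /YY /ssy /= flatten_cat /= cats0 !size_cat !size_nseq.
rewrite (@size_flatten_const _ _ (k2 + 2 * k1 + ly)); first lia.
by move=> i /andP [_ Hi]; rewrite size_bl HY.
Qed.

Lemma lower : exists2 L, alignment n m L &
  cost n m Xs Ys L + 2 * n * k2 <= delta FX YY.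
Proof.
have [w [H1 H2] Hw] := lcs_witness FX YY.
have Hsx : all (sorted (@rle S)) (ssx n k1 k2 Xs).
  by apply/allP => s /mapP [i _ ->]; apply: sorted_bl.
have Hsy : all (sorted (@rle S)) (ssy n m k1 k2 Ys).
  rewrite /ssy /= all_cat /= sorted_nseq_mu andbT /=.
  by rewrite andbT; apply/allP => s /mapP [i _ ->]; apply: sorted_bl.
have [t [Hst P1 P2 P3 P4]] := build_trip (@rle_trans S) Hsx Hsy H1 H2.
have [L HL HC] := core Hm Hmn HX HY (erefl k1) (erefl k2) P1 P2 P3 P4.
exists L => //.
rewrite /delta size_FX size_YY -Hw -Hst.
move: HC; lia.
Qed.

Lemma lcs_upper Delta : Delta <= n - m ->
  n * k2 + 2 * m * k1 + \sum_(j < m) lcs (Xs (Delta + j)) (Ys j) <= lcs FX YY.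
Proof.
move=> HD.
have Esplit : iota 0 n = iota 0 Delta ++ iota Delta m ++ iota (Delta + m) (n - Delta - m).
  rewrite -iotaD -iotaD; congr iota; lia.
rewrite /FX /ssx Esplit !map_cat !flatten_cat.
rewrite /YY /ssy /= flatten_cat /= cats0.
apply: leq_trans (lcs_cat _ _ _ _).
have A1 : Delta * k2 <= lcs (flatten [seq bl k1 k2 (Xs i) | i <- iota 0 Delta]) (nseq (n * k2) (sym_mu S)).
  rewrite -(size_nseq (Delta * k2) (sym_mu S)); apply: lcs_ub; first exact: nseq_sub_blocks.
  by apply: nseq_subseq; rewrite leq_mul2r; apply/orP; right; lia.
apply: leq_trans (leq_add A1 (lcs_cat _ _ _ _)).
have A3 : (n - Delta - m) * k2 <= lcs (flatten [seq bl k1 k2 (Xs i) | i <- iota (Delta + m) (n - Delta - m)])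
            (nseq (n * k2) (sym_mu S)).
  rewrite -(size_nseq ((n - Delta - m) * k2) (sym_mu S)); apply: lcs_ub; first exact: nseq_sub_blocks.
  by apply: nseq_subseq; rewrite leq_mul2r; apply/orP; right; lia.
have A2 : m * (k2 + 2 * k1) + \sum_(j < m) lcs (Xs (Delta + j)) (Ys j) <=
   lcs (flatten [seq bl k1 k2 (Xs i) | i <- iota Delta m]) (flatten [seq bl k1 k2 (Ys j) | j <- iota 0 m]).
  apply: leq_trans (lcs_flatten _); last by rewrite !size_map !size_iota.
  rewrite size_map size_iota.
  have -> : m * (k2 + 2 * k1) = \sum_(j < m) (k2 + 2 * k1) by rewrite sum_nat_const card_ord; lia.
  rewrite -big_split /=; apply: leq_sum => j _.
  rewrite (nth_map 0) ?size_iota // (nth_map 0) ?size_iota // !nth_iota // add0n.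
  exact: lcs_bl.
have E : n * k2 = Delta * k2 + m * k2 + (n - Delta - m) * k2.
  rewrite -!mulnDl; congr (_ * _); lia.
have E2 : 2 * m * k1 = m * (2 * k1) by rewrite [2 * m]mulnC -mulnA.
apply: leq_trans _ (leq_add (leqnn _) (leq_add A2 A3)).
move: E E2; rewrite mulnDr; clearbody k1 k2 FX YY; move: (n - Delta - m) (\sum_(j < m) _) => r s; lia.
Qed.

Lemma upper Delta : Delta <= n - m ->
  delta FX YY <= cost n m Xs Ys (structured m Delta) + 2 * n * k2.
Proof.
move=> HD.
have Hl := lcs_upper HD.
have Hcost : cost n m Xs Ys (structured m Delta) = \sum_(j < m) delta (Xs (Delta + j)) (Ys j).
  rewrite /cost /structured size_map size_iota ltnn.
  case: m Hm => [|m'] // _.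
  rewrite -addn1 iotaD map_cat /= last_cat /= add0n.
  have -> : head (0, 0) ([seq (Delta + j, j) | j <- iota 0 m'] ++ [:: (Delta + m', m')]) = (Delta, 0).
    by case: m' => [|m'] /=; rewrite ?addn0.
  rewrite /= [X in _ + X](_ : _ = 0); last by apply/eqP; rewrite muln_eq0; apply/orP; left; apply/eqP; lia.
  rewrite addn0 big_cat big_map /= (sum_ord_iota (fun j => delta (Xs (Delta + j)) (Ys j))) iotaD big_cat /= !big_cons !big_nil.
  by rewrite add0n.
have Hd : \sum_(j < m) delta (Xs (Delta + j)) (Ys j) + 2 * \sum_(j < m) lcs (Xs (Delta + j)) (Ys j)
          = m * (lx + ly).
  rewrite big_distrr -big_split /=.
  rewrite (eq_bigr (fun _ => lx + ly)); first by rewrite sum_nat_const card_ord; lia.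
  move=> j _; have Hj := ltn_ord j; rewrite delta_lcs' HX ?HY //; lia.
rewrite Hcost /delta size_FX size_YY.
have E1 : m * (k2 + 2 * k1 + ly) = 2 * (2 * (m * k1)) + m * lx + m * ly by rewrite /k2; nia.
have E2 : m * (lx + ly) = m * lx + m * ly by nia.
have E3 : 2 * m * k1 = 2 * (m * k1) by nia.
have E4 : n * (2 * k2) = 2 * (n * k2) by nia.
have E5 : 2 * n * k2 = 2 * (n * k2) by nia.
move: Hl Hd E1 E2 E3 E4 E5; clearbody k1 k2 FX YY.
move: (lcs FX YY) (\sum_(j < m) lcs _ _) (\sum_(j < m) delta _ _) => a b c.
move: (m * k1) (m * lx) (m * ly) (n * k2) => p q r u.
lia.
Qed.

End Main.

Import GRing.Theory Num.Theory.

Theorem mainTheorem7 (Sigma : eqType) (n m lx ly : nat)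
    (Xs Ys : nat -> seq Sigma) :
  1 <= m -> m <= n ->
  (forall i, i < n -> size (Xs i) = lx) ->
  (forall j, j < m -> size (Ys j) = ly) ->
  let k1 := 4 * (lx + ly) in
  let k2 := 2 * k1 + lx in
  let C := 2 * n * k2 in
  let D := ((delta (bigX k1 k2 n Xs) (bigY k1 k2 n m Ys))%:Z - (C%:Z))%R in
  (* min over all alignments of cost <= delta(X,Y) - C *)
  (exists2 L, alignment n m L & ((cost n m Xs Ys L)%:Z <= D)%R) /\
  (* delta(X,Y) - C <= min over structured alignments of cost *)
  (forall Delta, Delta <= n - m -> (D <= (cost n m Xs Ys (structured m Delta))%:Z)%R).
Proof.
move=> Hm Hmn HX HY k1 k2 C D; split.
  have [L HL HC] := lower Hm Hmn HX HY.
  exists L => //.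
  by rewrite /D lerBrDr -PoszD lez_nat (delta_eq lx ly Xs Ys Hm Hmn).
move=> Delta HD.
by rewrite /D lerBlDr -PoszD lez_nat (delta_eq lx ly Xs Ys Hm Hmn); exact: (upper Hm Hmn HX HY HD).
Qed.
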